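(* Let $d\ge3$, let $G$ be a $d$-map and let $\mathcal{L}$ be a $d$-GS labeling of $G$. For every inner edge $e$ of $G$, if $c_1,c_2,c_3,c_4$ are the four corners incident to $e$ listed in counterclockwise order around $e$, then the sum of the label jumps from $c_1$ to $c_2$, $c_2$ to $c_3$, $c_3$ to $c_4$ and $c_4$ to $c_1$ equals $d$.
   Context: A plane map is a connected graph (loops, multiple edges allowed) embedded in the plane without crossings, up to deformation; outer (unbounded) face, inner faces; outer vertices/edges lie on the outer face. A corner is the sector between consecutive half-edges around a vertex, inner if in an inner face; $\deg(f)$ = number of corners of face $f$. For $d\ge3$, a $d$-map has inner faces of degree $\le d$ and outer face of degree $d$ bounded by a simple cycle, with outer vertices $v_1,\dots,v_d$ in clockwise order. The four corners incident to an edge $e=\{u,v\}$ are the corners at $u$ and at $v$ on each side of $e$; they are ordered by turning counterclockwise around a small neighborhood of $e$. Label jump from $i$ to $i'$ in $[d]$: the $\delta\in\{0,\dots,d-1\}$ with $i+\delta\equiv i'\pmod d$. A $d$-GS labeling labels each inner corner in $[d]$ with (L0) corners at $v_i$ labeled $i$; (L1) around every inner vertex and every inner face, the jumps between consecutive corners in clockwise order sum to $d$; (L2) consecutive corners around an inner face have distinct labels; (L3) for each inner edge $e$ and incident face $f$, with $c,c'$ the corners of $f$ at $e$ ($c'$ following $c$ clockwise around $f$), $v$ the vertex of $c'$, $\delta$ the jump $c\to c'$ and $\epsilon$ the jump from $c'$ to the next corner clockwise around $v$ (outer corner at $v_i$ considered labeled $i$): $\delta+\epsilon>d-\deg(f)$.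 *)

(* Defs.v *)
From mathcomp Require Import all_boot.
Set Implicit Arguments. Unset Strict Implicit. Unset Printing Implicit Defensive.

(* Conventions:
   - D : finite set of darts (half-edges); a dart h is identified with the
     corner lying between h and sigma h (counterclockwise next dart at its vertex).
   - alpha : fixed-point-free involution (other half of the edge).
   - sigma : permutation, counterclockwise rotation around each vertex;
     vertices = sigma-orbits.
   - fphi h := sigma^-1 (alpha h): next corner counterclockwise around the face
     (face on the left); faces = fphi-orbits; fphi^-1 g = alpha (sigma g) is the
     next corner clockwise around the face.
   - The outer face is the fphi-orbit of a root dart r; v_(k+1) is the vertex of
     the corner iter k fphi r (this enumerates outer vertices clockwise). *)

Section Maps.
Variables (D : finType) (alpha sigma : D -> D).

Definition fphi (h : D) : D := finv sigma (alpha h).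
Definition fphi_inv (h : D) : D := alpha (sigma h).

Definition map_rel : rel D := fun a b => (b == sigma a) || (b == alpha a).

(* connected, genus-0 (Euler's formula V - E + F = 2) combinatorial map *)
Definition is_plane_map : Prop :=
  [/\ injective sigma,
      (forall h, alpha (alpha h) = h),
      (forall h, alpha h != h),
      (forall x y, connect map_rel x y) &
      fcard sigma D + fcard fphi D = #|D| %/ 2 + 2].

Variable r : D. (* root dart: its corner is the outer corner at v_1 *)

Definition outer_corner (h : D) : bool := fconnect fphi r h.
Definition face_deg (h : D) : nat := order fphi h.

Definition is_d_map (d : nat) : Prop :=
  [/\ is_plane_map,
      face_deg r = d,
      (* outer face bounded by a simple cycle: its d corners are at distinct vertices *)
      (forall i j, i < j < d -> ~~ fconnect sigma (iter i fphi r) (iter j fphi r)) &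
      (forall h, ~~ outer_corner h -> face_deg h <= d)].

Definition inner_edge (h : D) : bool := ~~ outer_corner h && ~~ outer_corner (alpha h).

Definition jump (d i i' : nat) : nat := (i' + d - i) %% d.

(* label of a corner, outer corner at v_i considered labelled i *)
Definition ext_label (d : nat) (L : D -> nat) (g : D) : nat :=
  if outer_corner g then (find (fun k => iter k fphi r == g) (iota 0 d)).+1
  else L g.

Definition is_GS_labeling (d : nat) (L : D -> nat) : Prop :=
      (forall h, ~~ outer_corner h -> 0 < L h <= d) /\
      (forall h k, ~~ outer_corner h -> k < d ->
          fconnect sigma (iter k fphi r) h -> L h = k.+1) /\
      (* L1 for inner vertices (clockwise = sigma^-1) *)
      (forall v, (forall g, fconnect sigma v g -> ~~ outer_corner g) ->
          \sum_(g | fconnect sigma v g) jump d (L g) (L (finv sigma g)) = d) /\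
      (* L1 for inner faces (clockwise = fphi_inv) *)
      (forall h, ~~ outer_corner h ->
          \sum_(g | fconnect fphi h g) jump d (L g) (L (fphi_inv g)) = d) /\
      (forall g, ~~ outer_corner g -> L g != L (fphi_inv g)) /\
      (* L3: face f on the left of h; c = fphi h, c' = h, v = tail of h *)
      (forall h, inner_edge h ->
          d - face_deg h <
          jump d (L (fphi h)) (L h) + jump d (L h) (ext_label d L (finv sigma h))).

End Maps.

(* Main.v *)
Require Import Defs.
From mathcomp Require Import all_boot zify.

Lemma jump_lt d x y : 0 < d -> jump d x y < d.
Proof. by move=> d0; rewrite /jump ltn_mod. Qed.

Lemma jump_same d x : jump d x x = 0.
Proof. by rewrite /jump (_ : x + d - x = d) ?modnn //; lia. Qed.

Lemma jump_mod d x y : x <= d -> jump d x y + x = y + d %[mod d].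
Proof. by move=> xd; rewrite /jump modnDml subnK //; lia. Qed.

Lemma mod4 d A B C E : A+B+C+E = 4 * d -> (A %% d + B %% d + C %% d + E %% d) %% d = 0.
Proof.
move=> H; apply/eqP; rewrite -/(dvdn _ _).
have HH : A+B+C+E = (A %% d + B %% d + C %% d + E %% d) + (A%/d + B%/d + C%/d + E%/d) * d.
  rewrite mulnDl !mulnDl {1}(divn_eq A d) {1}(divn_eq B d) {1}(divn_eq C d) {1}(divn_eq E d).
  set x1 := A %/ d * d; set x2 := B %/ d * d; set x3 := C %/ d * d; set x4 := E %/ d * d.
  lia.
have : d %| A+B+C+E by rewrite H dvdn_mull.
by rewrite HH dvdn_addl // dvdn_mull.
Qed.

Lemma jump_cyc d a b c e : a <= d -> b <= d -> c <= d -> e <= d ->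
  (jump d a b + jump d b c + jump d c e + jump d e a) %% d = 0.
Proof. by move=> ad bd cd ed; rewrite /jump mod4 //; lia. Qed.

Lemma jump_pos d x y : 0 < x <= d -> 0 < y <= d -> x != y -> 0 < jump d x y.
Proof.
move=> /andP[x0 xd] /andP[y0 yd] nxy; rewrite /jump.
case: (leqP x y) => hxy.
  have -> : y + d - x = (y - x) + d by lia.
  rewrite modnDr modn_small; lia.
rewrite modn_small; lia.
Qed.

Lemma sum_orbits (T : finType) (f : T -> T) (F : T -> nat) : injective f ->
  \sum_(g : T) F g = \sum_(x | froots f x) \sum_(g | fconnect f x g) F g.
Proof.
move=> finj.
have sym : connect_sym (frel f) by move=> x y; apply: fconnect_sym.
rewrite (partition_big (froot f) (froots f)) /=; last by move=> i _; exact: roots_root.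
apply: eq_bigr => x rx; apply: eq_bigl => g.
move/eqP: rx => rx; rewrite -[X in _ == X]rx (root_connect sym) fconnect_sym //.
Qed.

Lemma perm4 a b c e : c + e + a + b = a + b + c + e.
Proof. lia. Qed.

Lemma ge_of_mod d S : 0 < S -> S %% d = 0 -> d <= S.
Proof. by move=> S0 H; apply: dvdn_leq => //; apply/eqP. Qed.

Lemma first_le a b c e : 0 < a -> 0 < a + b + c + e.
Proof. lia. Qed.

Lemma arith1 d F V Fc Vc n : 2 < d -> F <= d*Fc + d*(d-2) -> V + d*d <= d*Vc ->
  Vc + Fc = n %/2 + 2 -> 2*(F+V) <= d*n.
Proof.
move=> d3 hF hV e.
have hm : n %/ 2 * 2 <= n by apply: leq_divM.
set m := n %/ 2 in e hm *.
nia.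
Qed.
Lemma arith2 d n x rest : 0 < n -> x + rest <= d * n -> n.-1 * d <= rest -> x <= d.
Proof. case: n => // n _ /=. nia. Qed.
Lemma arith3 d : 1 < d -> d * (d - 1) = d + d * (d - 2).
Proof. nia. Qed.

Lemma dbl a b : a + b + a + b = 2 * (a + b).
Proof. lia. Qed.

Theorem mainTheorem11 (d : nat) (D : finType) (alpha sigma : D -> D) (r : D)
    (L : D -> nat) :
  3 <= d ->
  is_d_map alpha sigma r d ->
  is_GS_labeling alpha sigma r d L ->
  forall h, inner_edge alpha sigma r h ->
    jump d (L (fphi alpha sigma h)) (L h)
    + jump d (L h) (L (finv sigma h))
    + jump d (L (finv sigma h)) (L (alpha h))
    + jump d (L (alpha h)) (L (fphi alpha sigma h)) = d.
Proof.
move=> d3 [[sinj aa afree _ euler] degr distinct _] [Lr [L0 [L1v [L1f [L2 L3]]]]] h0 ih0.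
unfold face_deg in degr.
unfold outer_corner in Lr, L0, L1v, L1f, L2.
unfold inner_edge, outer_corner in ih0.
set fp := fphi alpha sigma in degr distinct Lr L0 L1v L1f L2 ih0 *.
have d0 : 0 < d by apply: leq_trans d3.
have ainj : injective alpha by move=> x y H; rewrite -(aa x) H aa.
have fpinj : injective fp by move=> x y /(finv_inj sinj)/ainj.
have fpiK : cancel (fphi_inv alpha sigma) fp.
  by move=> g; rewrite /fp /fphi /fphi_inv aa finv_f.
have fpKi : cancel fp (fphi_inv alpha sigma).
  by move=> g; rewrite /fp /fphi /fphi_inv f_finv // aa.
pose p g := fun k => fconnect sigma (iter k fp r) g.
pose ov g := has (p g) (iota 0 d).
pose L' g := if ov g then (find (p g) (iota 0 d)).+1 else L g.
have outerA g : fconnect fp r g -> exists2 k, k < d & g = iter k fp r.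
  move=> c; exists (findex fp r g); first by rewrite -degr findex_max.
  by rewrite iter_findex.
have outerB g : fconnect fp r g -> ov g.
  case/outerA => k kd ->; apply/hasP; exists k; first by rewrite mem_iota.
  exact: connect0.
have L'C g : ~~ fconnect fp r g -> L' g = L g.
  move=> ng; rewrite /L'; case: ifP => // og.
  have fd : find (p g) (iota 0 d) < d by rewrite -[X in _ < X](size_iota 0 d) -has_find.
  have := nth_find 0 og; rewrite nth_iota // add0n => c.
  by rewrite (L0 g _ ng fd c).
have ssym : connect_sym (frel sigma) by move=> x y; exact: fconnect_sym.
have fsym : connect_sym (frel fp) by move=> x y; exact: fconnect_sym.
have fdlt g : ov g -> find (p g) (iota 0 d) < d.
  by move=> og; rewrite -[X in _ < X](size_iota 0 d) -has_find.
have L'r g : 0 < L' g <= d.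
  rewrite /L'; case: ifP => og; first by rewrite ltnS fdlt.
  apply: Lr; apply/negP => /outerB; by rewrite og.
have peq x g : fconnect sigma x g -> p x =1 p g.
  by move=> c k; rewrite /p (same_connect_r ssym c).
have L'eqv x g : fconnect sigma x g -> ov x -> L' x = L' g.
  move=> c ox; have e := peq x g c.
  have og : ov g by rewrite /ov -(eq_has e).
  by rewrite /L' ox og (eq_find e).
have Fk k g : k < d -> fconnect sigma (iter k fp r) g -> L' g = k.+1.
  move=> kd c.
  have og : ov g by apply/hasP; exists k; rewrite ?mem_iota.
  rewrite /L' og; congr S.
  case: (ltngtP (find (p g) (iota 0 d)) k) => // H.
  - have := nth_find 0 og; rewrite nth_iota ?fdlt // add0n => c'.
    have := distinct (find (p g) (iota 0 d)) k; rewrite H kd => /(_ isT)/negP; case.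
    apply: connect_trans c' _; by rewrite ssym.
  - by have := before_find 0 H; rewrite nth_iota // add0n /p c.
pose S' h := jump d (L' (fp h)) (L' h) + jump d (L' h) (L' (finv sigma h))
  + jump d (L' (finv sigma h)) (L' (alpha h)) + jump d (L' (alpha h)) (L' (fp h)).
have fpa h : fp (alpha h) = finv sigma h by rewrite /fp /fphi aa.
have S'sym h : S' (alpha h) = S' h.
  by rewrite /S' fpa aa {1}/fp /fphi perm4.
have Pos1 h : fconnect fp r h -> 0 < jump d (L' (fp h)) (L' h).
  case/outerA => k kd ->.
  rewrite (Fk k (iter k fp r) kd (connect0 _ _)).
  apply: jump_pos; rewrite ?L'r //.
  rewrite -iterS.
  case: (ltnP k.+1 d) => kd'.
    by rewrite (Fk k.+1 _ kd' (connect0 _ _)) eqn_leq ltnn.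
  have -> : k.+1 = d by apply: anti_leq; rewrite kd kd'.
  rewrite -{1}degr (iter_order fpinj) (Fk 0 r d0 (connect0 _ _)).
  by rewrite neq_ltn (leq_trans _ d3).
have Sge h : d <= S' h.
  have L'd g : L' g <= d by case/andP: (L'r g).
  apply: ge_of_mod; last by apply: jump_cyc; apply: L'd.
  case oh: (fconnect fp r h); first by apply: first_le; apply: Pos1.
  case oah: (fconnect fp r (alpha h)).
    by rewrite -S'sym; apply: first_le; apply: Pos1.
  have ofh : ~~ fconnect fp r (fp h) by rewrite -(same_fconnect1_r fpinj) oh.
  apply: first_le; rewrite (L'C _ ofh) (L'C h (negbT oh)).
  apply: jump_pos; rewrite ?Lr ?oh //.
  by have := L2 _ ofh; rewrite fpKi.
pose FJ g := jump d (L' g) (L' (fphi_inv alpha sigma g)).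
pose VJ g := jump d (L' g) (L' (finv sigma g)).
have Ssum : \sum_h S' h = 2 * (\sum_g FJ g + \sum_g VJ g).
  rewrite /S' !big_split /=.
  have -> : \sum_h jump d (L' (fp h)) (L' h) = \sum_g FJ g.
    by rewrite [RHS](reindex_inj fpinj); apply: eq_bigr => h _; rewrite /FJ fpKi.
  have -> : \sum_h jump d (L' (finv sigma h)) (L' (alpha h)) = \sum_g FJ g.
    rewrite [RHS](reindex_inj (finv_inj sinj)); apply: eq_bigr => h _.
    by rewrite /FJ /fphi_inv (f_finv sinj).
  have -> : \sum_h jump d (L' (alpha h)) (L' (fp h)) = \sum_g VJ g.
    by rewrite [RHS](reindex_inj ainj); apply: eq_bigr => h _; rewrite /VJ.
  have -> : \sum_i jump d (L' i) (L' (finv sigma i)) = \sum_g VJ g by [].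
  by rewrite dbl.
have Fbound : \sum_g FJ g <= d * fcard fp D + d * (d - 2).
  rewrite (@sum_orbits _ fp FJ fpinj).
  have G x : froots fp x ->
      \sum_(g | fconnect fp x g) FJ g <= d + (x == froot fp r) * (d * (d - 2)).
    move=> rx; case ox: (fconnect fp r x).
      have -> : x == froot fp r by rewrite (rootP fsym ox) (eqP rx).
      rewrite mul1n -arith3 ?(leq_trans _ d3) //.
      have cx : #|fconnect fp x| = d.
        rewrite -degr; unfold order; apply: eq_card => y.
        by rewrite /in_mem /= (same_connect fsym ox).
      rewrite -{1}cx -sum_nat_const; apply: leq_sum => g _.
      by rewrite subn1 -ltnS prednK ?jump_lt.
    suff -> : \sum_(g | fconnect fp x g) FJ g = d by rewrite leq_addr.
    rewrite -[RHS](L1f x (negbT ox)).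
    apply: eq_bigr => g c.
    have ig : ~~ fconnect fp r g.
      apply/negP => rg; move/negP: ox; apply; apply: connect_trans rg _; by rewrite fsym.
    have ifg : ~~ fconnect fp r (fphi_inv alpha sigma g) by rewrite (same_fconnect1_r fpinj) fpiK.
    by rewrite /FJ (L'C _ ig) (L'C _ ifg).
  apply: leq_trans (@leq_sum _ _ _ _ _ G) _.
  rewrite big_split /= sum_nat_const (bigD1 (froot fp r)) /=; last exact: roots_root.
  rewrite eqxx mul1n big1 ?addn0; last by move=> x /andP[_ /negbTE ->].
  rewrite mulnC leq_add2r leq_eqVlt; apply/orP; left; apply/eqP; congr (d * _).
  by rewrite /n_comp_mem; apply: eq_card => x; rewrite !inE andbT.
have Vbound : \sum_g VJ g + d * d <= d * fcard sigma D.
  rewrite (@sum_orbits _ sigma VJ sinj).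
  have G x : froots sigma x ->
      \sum_(g | fconnect sigma x g) VJ g = (if ov x then 0 else d).
    move=> rx; case ox: (ov x).
      apply: big1 => g c.
      have c' : fconnect sigma x (finv sigma g) by apply: connect_trans c (fconnect_finv sigma g).
      by rewrite /VJ -(L'eqv x g c ox) -(L'eqv x _ c' ox) jump_same.
    have nov g : fconnect sigma x g -> ov g = false.
      by move=> c; rewrite /ov -(eq_has (peq x g c)).
    rewrite -[RHS](L1v x); last first.
      by move=> g c; apply/negP => /outerB; rewrite nov.
    apply: eq_bigr => g c.
    have c' : fconnect sigma x (finv sigma g) by apply: connect_trans c (fconnect_finv sigma g).
    by rewrite /VJ /L' (nov g c) (nov _ c').
  rewrite (eq_bigr _ G).
  have Hs : \sum_(x | froots sigma x) (if ov x then 0 else d)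
          + \sum_(x | froots sigma x) (if ov x then d else 0) = fcard sigma D * d.
    rewrite -big_split /=.
    have -> : \sum_(i | froots sigma i) ((if ov i then 0 else d) + (if ov i then d else 0))
       = \sum_(i | froots sigma i) d by apply: eq_bigr => x _; case: (ov x); rewrite ?addn0.
    rewrite sum_nat_const; congr (_ * d).
    by rewrite /n_comp_mem; apply: eq_card => x; rewrite !inE andbT.
  have Hc : d <= #|[pred x | froots sigma x && ov x]|.
    pose f (k : 'I_d) := froot sigma (iter k fp r).
    have finj : injective f.
      move=> i j /eqP; rewrite /f (root_connect ssym) => c; apply: val_inj => /=.
      case: (ltngtP i j) => // H.
        by have := distinct i j; rewrite H ltn_ord c => /(_ isT).
      by have := distinct j i; rewrite H ltn_ord ssym c => /(_ isT).
    rewrite -{1}(card_ord d) -(card_imset _ finj); apply: subset_leq_card.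
    apply/subsetP => x /imsetP [k _ ->]; rewrite inE /= /f roots_root //=.
    by apply/hasP; exists (nat_of_ord k); rewrite ?mem_iota ?ltn_ord //; exact: connect_root.
  have Hb : \sum_(x | froots sigma x) (if ov x then d else 0)
          = #|[pred x | froots sigma x && ov x]| * d.
    by rewrite -big_mkcondr sum_nat_const.
  rewrite mulnC -Hs leq_add2l Hb mulnC leq_mul2l Hc orbT //.
have Sle : \sum_h S' h <= d * #|D|.
  rewrite Ssum; apply: (@arith1 d _ _ _ _ #|D| d3 Fbound Vbound); exact: euler.
have S'h0 : S' h0 = d.
  apply/eqP; rewrite eqn_leq Sge andbT.
  have D0 : 0 < #|D| by apply/card_gt0P; exists h0.
  rewrite (bigD1 h0) //= in Sle; apply: (@arith2 d _ _ _ D0 Sle).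
  rewrite -(cardC1 h0) -sum_nat_const; apply: leq_sum => h _; exact: Sge.
case/andP: ih0 => ih ia.
have ifh : ~~ fconnect fp r (fp h0) by rewrite -(same_fconnect1_r fpinj).
have ish : ~~ fconnect fp r (finv sigma h0) by rewrite -fpa -(same_fconnect1_r fpinj).
by move: S'h0; rewrite /S' !L'C.
Qed.
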